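(* Assume $\ker(K)\cap\ker(D)=\{0\}$ and fix $\delta\ge0$ and data $y^\delta$. Let $\{\Psi_k\}_{k\in\mathbb{N}}$ be a sequence of reconstructors and $\Psi^*$ a reconstructor such that $\sup_{y\in\mathcal{Y}^\delta}\|\,|D\Psi_k(y)|-|D\Psi^*(y)|\,\|_1\to0$ as $k\to\infty$, where $\mathcal{Y}^\delta=\{y\in\mathbb{R}^m:\inf_{x\in\mathcal{X}}\|Kx-y\|_2\le\delta\}$. For each $k$ let $x^*_{\Psi_k,\delta}$ be the unique minimizer over $\mathcal{X}$ of $\mathcal{J}_{\Psi_k,\delta}(x)=\|Kx-y^\delta\|_2^2+\lambda\|w(\Psi_k(y^\delta))\odot|Dx|\|_1$, and let $x^*_{\Psi^*,\delta}$ denote the unique minimizer over $\mathcal{X}$ of $\mathcal{J}_{\Psi^*,\delta}(x)=\|Kx-y^\delta\|_2^2+\lambda\|w(\Psi^*(y^\delta))\odot|Dx|\|_1$. Then $\{x^*_{\Psi_k,\delta}\}_{k\in\mathbb{N}}$ has a convergent subsequence whose limit is $x^*_{\Psi^*,\delta}$.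
   Context: Let $K\in\mathbb{R}^{m\times n}$ with $m\le n$, and let $D_h,D_v\in\mathbb{R}^{n\times n}$ be the discrete horizontal and vertical difference operators; $Dx=\begin{bmatrix}D_hx\\ D_vx\end{bmatrix}\in\mathbb{R}^{2n}$, and $|Dx|\in\mathbb{R}^n$, $(|Dx|)_i=\sqrt{(D_hx)_i^2+(D_vx)_i^2}$. $\mathcal{X}=\{x\in\mathbb{R}^n: x_i\ge 0\ \forall i\}$. Fix $\lambda>0$, $\eta>0$, $p\in(0,1)$, and for $\tilde x\in\mathbb{R}^n$ define $(w(\tilde{x}))_i=\big(\eta/\sqrt{\eta^2+(|D\tilde{x}|)_i^2}\big)^{1-p}$. A reconstructor is a Lipschitz continuous map $\Psi:\mathbb{R}^m\to\mathbb{R}^n$. The data is $y^\delta=Kx^{GT}+e$ with $x^{GT}\in\mathcal{X}$ and $\|e\|_2\le\delta$. $\odot$ is the entrywise product. *)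

(* Defs.v *)
From HB Require Import structures.
From mathcomp Require Import all_boot all_order all_algebra.
From mathcomp Require Import all_classical all_reals all_analysis.
Set Implicit Arguments. Unset Strict Implicit. Unset Printing Implicit Defensive.
Import Order.TTheory GRing.Theory Num.Theory.
Local Open Scope classical_set_scope.
Local Open Scope ring_scope.

Section Defs.
Variable R : realType.

Definition norm2 (k : nat) (v : 'cV[R]_k) : R := Num.sqrt (\sum_i (v i 0) ^+ 2).
Definition norm1 (k : nat) (v : 'cV[R]_k) : R := \sum_i `|v i 0|.

Definition absD (n : nat) (Dh Dv : 'M[R]_n) (x : 'cV[R]_n) : 'cV[R]_n :=
  \col_i Num.sqrt ((Dh *m x) i 0 ^+ 2 + (Dv *m x) i 0 ^+ 2).

Definition hadamard (n : nat) (u v : 'cV[R]_n) : 'cV[R]_n := \col_i (u i 0 * v i 0).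

Definition weight (n : nat) (Dh Dv : 'M[R]_n) (eta p : R) (xt : 'cV[R]_n) : 'cV[R]_n :=
  \col_i ((eta / Num.sqrt (eta ^+ 2 + (absD Dh Dv xt) i 0 ^+ 2)) `^ (1 - p)).

Definition Xset (n : nat) : set 'cV[R]_n := [set x | forall i, 0 <= x i 0].

Definition reconstructor (m n : nat) (Psi : 'cV[R]_m -> 'cV[R]_n) : Prop :=
  exists L : R, forall y1 y2, norm2 (Psi y1 - Psi y2) <= L * norm2 (y1 - y2).

Definition Ydelta (m n : nat) (K : 'M[R]_(m, n)) (delta : R) : set 'cV[R]_m :=
  [set y | inf [set norm2 (K *m x - y) | x in @Xset n] <= delta].

Definition Jobj (m n : nat) (K : 'M[R]_(m, n)) (Dh Dv : 'M[R]_n) (lam eta p : R)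
  (ydelta : 'cV[R]_m) (Psi : 'cV[R]_m -> 'cV[R]_n) (x : 'cV[R]_n) : R :=
  norm2 (K *m x - ydelta) ^+ 2
  + lam * norm1 (hadamard (weight Dh Dv eta p (Psi ydelta)) (absD Dh Dv x)).

Definition unique_minimizer (n : nat) (f : 'cV[R]_n -> R) (x : 'cV[R]_n) : Prop :=
  Xset x /\ (forall z, Xset z -> f x <= f z) /\
  (forall z, Xset z -> (forall z', Xset z' -> f z <= f z') -> z = x).

End Defs.

(* Main.v *)
Require Import Defs.
From HB Require Import structures.
From mathcomp Require Import all_boot all_order all_algebra.
From mathcomp Require Import all_classical all_reals all_analysis.
From mathcomp Require Import ring lra.
Import Order.TTheory GRing.Theory Num.Theory.
Import numFieldNormedType.Exports.
Local Open Scope classical_set_scope.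
Local Open Scope ring_scope.

Lemma norm2_ge0 (R : realType) k (v : 'cV[R]_k) : 0 <= norm2 v.
Proof. exact: sqrtr_ge0. Qed.

Lemma norm2_sqr (R : realType) k (v : 'cV[R]_k) : norm2 v ^+ 2 = \sum_i (v i 0) ^+ 2.
Proof. by rewrite /norm2 sqr_sqrtr // sumr_ge0 // => i _; exact: sqr_ge0. Qed.

Lemma norm2N (R : realType) k (v : 'cV[R]_k) : norm2 (- v) = norm2 v.
Proof. by rewrite /norm2; congr Num.sqrt; apply: eq_bigr => i _; rewrite mxE sqrrN. Qed.

Lemma norm2Z (R : realType) k (t : R) (v : 'cV[R]_k) : 0 <= t -> norm2 (t *: v) = t * norm2 v.
Proof.
move=> t0; rewrite /norm2 (eq_bigr (fun i => t ^+ 2 * v i 0 ^+ 2)); last first.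
  by move=> i _; rewrite mxE exprMn.
rewrite -mulr_sumr sqrtrM ?sqr_ge0 // sqrtr_sqr ger0_norm //.
Qed.

Lemma absD_ge0 (R : realType) n (Dh Dv : 'M[R]_n) x i : 0 <= absD Dh Dv x i 0.
Proof. by rewrite mxE sqrtr_ge0. Qed.

Lemma weight_gt0 (R : realType) n (Dh Dv : 'M[R]_n) eta p x i : 0 < eta ->
  0 < weight Dh Dv eta p x i 0.
Proof.
move=> e0; rewrite mxE powR_gt0 // divr_gt0 // sqrtr_gt0.
by rewrite ltr_wpDr ?sqr_ge0 // exprn_gt0.
Qed.

Lemma conv_sq (R : realType) (t a b : R) : 0 <= t <= 1 ->
  ((1 - t) * a + t * b) ^+ 2 <= (1 - t) * a ^+ 2 + t * b ^+ 2.
Proof. case/andP=> t0 t1; have h : 0 <= t * (1 - t) * (a - b) ^+ 2.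
  by rewrite mulr_ge0 ?sqr_ge0 ?mulr_ge0 // subr_ge0.
nra. Qed.

Lemma cs2 (R : realType) (S1 S2 p1 q1 p2 q2 : R) : 0 <= S1 -> 0 <= S2 ->
  S1 ^+ 2 = p1 ^+ 2 + q1 ^+ 2 -> S2 ^+ 2 = p2 ^+ 2 + q2 ^+ 2 ->
  p1 * p2 + q1 * q2 <= S1 * S2.
Proof.
move=> h1 h2 e1 e2.
have h : (p1 * p2 + q1 * q2) ^+ 2 <= (S1 * S2) ^+ 2.
  rewrite exprMn e1 e2; have := sqr_ge0 (p1 * q2 - p2 * q1); nra.
have hS : 0 <= S1 * S2 by rewrite mulr_ge0.
nra.
Qed.

Lemma conv_sqrt (R : realType) (t p1 q1 p2 q2 : R) : 0 <= t <= 1 ->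
  Num.sqrt (((1 - t) * p1 + t * p2) ^+ 2 + ((1 - t) * q1 + t * q2) ^+ 2)
  <= (1 - t) * Num.sqrt (p1 ^+ 2 + q1 ^+ 2) + t * Num.sqrt (p2 ^+ 2 + q2 ^+ 2).
Proof.
case/andP=> t0 t1.
set S1 := Num.sqrt (p1 ^+ 2 + q1 ^+ 2); set S2 := Num.sqrt (p2 ^+ 2 + q2 ^+ 2).
have s1 : 0 <= S1 by exact: sqrtr_ge0.
have s2 : 0 <= S2 by exact: sqrtr_ge0.
have e1 : S1 ^+ 2 = p1 ^+ 2 + q1 ^+ 2 by rewrite sqr_sqrtr // addr_ge0 ?sqr_ge0.
have e2 : S2 ^+ 2 = p2 ^+ 2 + q2 ^+ 2 by rewrite sqr_sqrtr // addr_ge0 ?sqr_ge0.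
have cs := @cs2 R _ _ _ _ _ _ s1 s2 e1 e2.
have hr : 0 <= (1 - t) * S1 + t * S2 by rewrite addr_ge0 ?mulr_ge0 // subr_ge0.
rewrite -(ger0_norm hr) -sqrtr_sqr ler_sqrt ?sqr_ge0 //.
have h : 0 <= t * (1 - t) * (S1 * S2 - (p1 * p2 + q1 * q2)).
  by rewrite !mulr_ge0 // subr_ge0.
have -> : ((1 - t) * S1 + t * S2) ^+ 2 = (1 - t) ^+ 2 * (p1 ^+ 2 + q1 ^+ 2) + t ^+ 2 * (p2 ^+ 2 + q2 ^+ 2) + 2 * (t * (1 - t) * (S1 * S2)).
  by rewrite -e1 -e2; ring.
clearbody S1 S2; nra.
Qed.
Lemma mul_conv (R : realType) a b (M : 'M[R]_(a, b)) (x1 x2 : 'cV[R]_b) t :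
  M *m ((1 - t) *: x1 + t *: x2) = (1 - t) *: (M *m x1) + t *: (M *m x2).
Proof. by rewrite mulmxDr -!scalemxAr. Qed.

Lemma mul_conv_sub (R : realType) a b (M : 'M[R]_(a, b)) (x1 x2 : 'cV[R]_b) y t :
  M *m ((1 - t) *: x1 + t *: x2) - y = (1 - t) *: (M *m x1 - y) + t *: (M *m x2 - y).
Proof.
rewrite mul_conv !scalerBr addrACA -opprD -scalerDl subrK scale1r //.
Qed.

Lemma norm1_hadamard (R : realType) n (w v : 'cV[R]_n) :
  (forall i, 0 <= w i 0) -> (forall i, 0 <= v i 0) ->
  norm1 (hadamard w v) = \sum_i w i 0 * v i 0.
Proof.
by move=> hw hv; apply: eq_bigr => i _; rewrite mxE ger0_norm // mulr_ge0.
Qed.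

Lemma weight_ge0 (R : realType) n (Dh Dv : 'M[R]_n) eta p x i :
  0 <= weight Dh Dv eta p x i 0.
Proof. by rewrite mxE powR_ge0. Qed.

Lemma absDE (R : realType) n (Dh Dv : 'M[R]_n) x i :
  absD Dh Dv x i 0 = Num.sqrt ((Dh *m x) i 0 ^+ 2 + (Dv *m x) i 0 ^+ 2).
Proof. by rewrite mxE. Qed.

Lemma entry_conv (R : realType) n (A B : 'cV[R]_n) i t :
  ((1 - t) *: A + t *: B) i 0 = (1 - t) * A i 0 + t * B i 0.
Proof. by rewrite !mxE. Qed.

Lemma Jconv (R : realType) m n (K : 'M[R]_(m, n)) (Dh Dv : 'M[R]_n) lam eta p y Psi
  (x1 x2 : 'cV[R]_n) t : 0 <= lam -> 0 <= t <= 1 ->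
  Jobj K Dh Dv lam eta p y Psi ((1 - t) *: x1 + t *: x2) <=
  (1 - t) * Jobj K Dh Dv lam eta p y Psi x1 + t * Jobj K Dh Dv lam eta p y Psi x2.
Proof.
move=> l0 ht; have /andP[t0 t1] := ht.
rewrite /Jobj !norm2_sqr !norm1_hadamard; try by move=> i; rewrite ?weight_ge0 ?absD_ge0.
rewrite mul_conv_sub.
set w := weight _ _ _ _ _.
have H1 : \sum_i ((1 - t) *: (K *m x1 - y) + t *: (K *m x2 - y)) i 0 ^+ 2 <=
   (1 - t) * \sum_i (K *m x1 - y) i 0 ^+ 2 + t * \sum_i (K *m x2 - y) i 0 ^+ 2.
  rewrite !mulr_sumr -big_split /=; apply: ler_sum => i _.
  by rewrite entry_conv conv_sq.
have H2 : \sum_i w i 0 * absD Dh Dv ((1 - t) *: x1 + t *: x2) i 0 <=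
   (1 - t) * \sum_i w i 0 * absD Dh Dv x1 i 0 + t * \sum_i w i 0 * absD Dh Dv x2 i 0.
  rewrite !mulr_sumr -big_split /=; apply: ler_sum => i _.
  rewrite mulrCA (mulrCA t) -mulrDr ler_wpM2l ?weight_ge0 //.
  rewrite !absDE !mul_conv !entry_conv; exact: conv_sqrt.
have H3 := ler_wpM2l l0 H2.
set A := \sum_i _ in H1; set B := \sum_i _ in H3.
rewrite -/A -/B.
nra.
Qed.

Lemma c_add (T : topologicalType) (R : realType) (f g : T -> R) :
  continuous f -> continuous g -> continuous (fun x => f x + g x).
Proof. by move=> hf hg x; apply: cvgD; [exact: hf|exact: hg]. Qed.

Lemma c_mul (T : topologicalType) (R : realType) (f g : T -> R) :
  continuous f -> continuous g -> continuous (fun x => f x * g x).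
Proof. by move=> hf hg x; apply: cvgM; [exact: hf|exact: hg]. Qed.

Lemma c_cst (T : topologicalType) (R : realType) (c : R) :
  continuous (fun _ : T => c).
Proof. by move=> x; exact: cvg_cst. Qed.

Lemma c_sqrt (T : topologicalType) (R : realType) (f : T -> R) :
  continuous f -> continuous (fun x => Num.sqrt (f x)).
Proof.
move=> hf x; apply: (@continuous_comp _ _ _ f (@Num.sqrt R)); first exact: hf.
exact: sqrt_continuous.
Qed.

Lemma c_norm (T : topologicalType) (R : realType) (f : T -> R) :
  continuous f -> continuous (fun x => `|f x|).
Proof. by move=> hf x; apply: cvg_norm; exact: hf. Qed.

Lemma c_sum (T : topologicalType) (R : realType) k (F : 'I_k -> T -> R) :
  (forall i, continuous (F i)) -> continuous (fun x => \sum_i F i x).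
Proof.
move=> hF.
suff H : forall s : seq 'I_k, continuous (fun x => \sum_(i <- s) F i x) by exact: H.
elim=> [|a s IH].
  under eq_fun do rewrite big_nil; exact: c_cst.
under eq_fun do rewrite big_cons; exact: c_add.
Qed.

Lemma c_coord (R : realType) n (i : 'I_n) :
  continuous (fun v : 'rV[R]_n => v^T i 0).
Proof.
under eq_fun do rewrite mxE. exact: (@coord_continuous R 1 n 0 i).
Qed.

Lemma c_mulmx (R : realType) a n (M : 'M[R]_(a, n)) (i : 'I_a) :
  continuous (fun v : 'rV[R]_n => (M *m v^T) i 0).
Proof.
under eq_fun do rewrite mxE.
apply: c_sum => j; apply: c_mul; [exact: c_cst|exact: c_coord].
Qed.

Lemma c_coord0 (R : realType) n (i : 'I_n) :
  continuous (fun v : 'rV[R]_n => v 0 i).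
Proof. exact: (@coord_continuous R 1 n 0 i). Qed.

Lemma c_opp (T : topologicalType) (R : realType) (f : T -> R) :
  continuous f -> continuous (fun x => - f x).
Proof.
move=> hf; have -> : (fun x => - f x) = (fun x => (-1) * f x).
  by apply: funext => x; rewrite mulN1r.
by apply: c_mul => //; exact: c_cst.
Qed.

Lemma c_sq (T : topologicalType) (R : realType) (f : T -> R) :
  continuous f -> continuous (fun x => f x ^+ 2).
Proof. by move=> hf; under eq_fun do rewrite expr2; exact: c_mul. Qed.

Ltac cont := repeat first [ apply: c_cst | apply: c_coord0 | apply: c_sq | apply: c_add
  | apply: c_mul | apply: c_sqrt | apply: c_norm | apply: c_opp | apply: c_sum => ? ].

Lemma c_norm2 (R : realType) n (x0 : 'cV[R]_n) :
  continuous (fun v : 'rV[R]_n => norm2 (v^T - x0)).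
Proof. rewrite /norm2; under eq_fun do under eq_bigr do rewrite !mxE. cont. Qed.

Lemma coord_le_norm2 (R : realType) n (u : 'cV[R]_n) j : `|u j 0| <= norm2 u.
Proof.
rewrite /norm2 -sqrtr_sqr ler_sqrt; last by rewrite sumr_ge0 // => i _; rewrite sqr_ge0.
rewrite (bigD1 j) //= lerDl sumr_ge0 // => i _; exact: sqr_ge0.
Qed.

Lemma coord_le_norm1 (R : realType) n (u : 'cV[R]_n) j : `|u j 0| <= norm1 u.
Proof. by rewrite /norm1 (bigD1 j) //= lerDl sumr_ge0. Qed.

Lemma seg_sub (R : realType) n (x0 x : 'cV[R]_n) t :
  (1 - t) *: x0 + t *: x - x0 = t *: (x - x0).
Proof. by apply/matrixP => i j; rewrite !mxE; ring. Qed.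

Lemma wellposed (R : realType) n (J : 'cV[R]_n -> R) (x0 : 'cV[R]_n) (eps : R) :
  0 < eps ->
  (forall x t, Xset x -> 0 <= t <= 1 -> J ((1 - t) *: x0 + t *: x) <= (1 - t) * J x0 + t * J x) ->
  continuous (fun v : 'rV[R]_n => J v^T) ->
  unique_minimizer J x0 ->
  exists2 c, 0 < c & forall x, Xset x -> eps <= norm2 (x - x0) -> J x0 + c <= J x.
Proof.
move=> e0 Jc Jcont [X0 [Jmin Juniq]].
case: (pselect (exists x, Xset x /\ eps <= norm2 (x - x0))) => [[x1 [X1 N1]] | nex]; last first.
  by exists 1 => // x Xx Nx; exfalso; apply: nex; exists x.
pose tt (x : 'cV[R]_n) := eps / norm2 (x - x0).
pose sp (x : 'cV[R]_n) := (1 - tt x) *: x0 + tt x *: x.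
have seg : forall x, Xset x -> eps <= norm2 (x - x0) ->
    [/\ 0 < tt x <= 1, Xset (sp x) & norm2 (sp x - x0) = eps].
  move=> x Xx Nx; have d0 : 0 < norm2 (x - x0) by apply: lt_le_trans Nx.
  have t0 : 0 < tt x by rewrite divr_gt0.
  have t1 : tt x <= 1 by rewrite ler_pdivrMr // mul1r.
  split; first by rewrite t0 t1.
    move=> i; rewrite /sp entry_conv addr_ge0 // mulr_ge0 //; last by rewrite ltW.
    by rewrite subr_ge0.
  rewrite /sp seg_sub norm2Z ?ltW // /tt mulfVK //; exact: lt0r_neq0.
pose A := [set v : 'rV[R]_n | Xset v^T /\ norm2 (v^T - x0) = eps].
have A0 : A !=set0.
  have [_ ? ?] := seg x1 X1 N1; exists (sp x1)^T; by rewrite /A /= trmxK.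
have Acl : closed A.
  have -> : A = (\bigcap_(i in setT) [set v : 'rV[R]_n | 0 <= v 0 i]) `&`
           ((fun v : 'rV[R]_n => norm2 (v^T - x0)) @^-1` [set r | r = eps]).
    apply/seteqP; split => v /=.
      by case=> h1 h2; split => // i _; have := h1 i; rewrite mxE.
    by case=> h1 h2; split => // i; rewrite mxE; exact: h1.
  apply: closedI.
    apply: closed_bigI => i _.
    apply: (@preimage_closed _ _ (fun v : 'rV[R]_n => v 0 i) [set r | 0 <= r]).
      by move=> v _; exact: c_coord0.
    exact: closed_ge.
  apply: preimage_closed; last exact: closed_eq.
  by move=> v _; exact: c_norm2.
have Abd : bounded_set A.
  rewrite /bounded_set /=; exists (eps + norm1 x0); split; first exact: num_real.
  move=> M hM v [Xv Nv]; rewrite /=.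
have -> : `|v| = mx_norm v by [].
rewrite mx_normrE.
  apply: bigmax_le.
    apply: le_trans (ltW hM); apply: addr_ge0; first exact: ltW.
    by rewrite /norm1; apply: sumr_ge0 => i _; exact: normr_ge0.
  case=> i j _ /=; rewrite (ord1 i).
  apply: le_trans (ltW hM).
  have -> : v 0 j = (v^T - x0) j 0 + x0 j 0 by rewrite !mxE subrK.
  apply: le_trans (ler_normD _ _) _; apply: lerD; last exact: coord_le_norm1.
  by rewrite -Nv coord_le_norm2.
have Acp : compact A by exact: bounded_closed_compact.
have cw : {within A, continuous (fun v : 'rV[R]_n => J v^T)}.
  exact: continuous_subspaceT.
have [v vA vmin] := EVT_min_rV A0 Acp cw.
move: vA; rewrite inE => -[Xz Nz].
set z := v^T in Xz Nz vmin.
exists (J z - J x0).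
  rewrite subr_gt0 lt_def Jmin // andbT; apply/negP => /eqP Jeq.
  have zx0 : z = x0 by apply: Juniq => // z' Xz'; rewrite Jeq; exact: Jmin.
  by move: Nz; rewrite zx0 subrr /norm2 big1 ?sqrtr0 => [h|i _]; [move: e0; rewrite h ltxx | rewrite mxE expr0n].
move=> x Xx Nx; have [/andP[t0 t1] Xs Ns] := seg x Xx Nx.
have h1 : J z <= J (sp x).
  have := vmin (sp x)^T; rewrite trmxK; apply; rewrite inE /A /= trmxK; split => //.
have tI : 0 <= tt x <= 1 by rewrite (ltW t0) t1.
have h2 := Jc x (tt x) Xx tI.
have h3 := Jmin x Xx.
rewrite addrC subrK; rewrite -/(sp x) in h2.
nra.
Qed.

Lemma entryB (R : realType) a b (A B : 'M[R]_(a, b)) i j : (A - B) i j = A i j - B i j.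
Proof. by rewrite !mxE. Qed.

Lemma hadE (R : realType) n (u v : 'cV[R]_n) i : hadamard u v i 0 = u i 0 * v i 0.
Proof. by rewrite mxE. Qed.

Lemma weightE (R : realType) n (Dh Dv : 'M[R]_n) eta p x i :
  weight Dh Dv eta p x i 0 =
  (eta / Num.sqrt (eta ^+ 2 + absD Dh Dv x i 0 ^+ 2)) `^ (1 - p).
Proof. by rewrite [LHS]mxE. Qed.

Lemma c_inv (T : topologicalType) (R : realType) (f : T -> R) :
  continuous f -> (forall x, f x != 0) -> continuous (fun x => (f x)^-1).
Proof. by move=> hf h0 x; apply: cvgV; [exact: h0|exact: hf]. Qed.

Lemma c_ln (T : topologicalType) (R : realType) (f : T -> R) :
  continuous f -> (forall x, 0 < f x) -> continuous (fun x => ln (f x)).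
Proof.
move=> hf h0 x; apply: (@continuous_comp _ _ _ f (@ln R)); first exact: hf.
exact: continuous_ln.
Qed.

Lemma c_exp (T : topologicalType) (R : realType) (f : T -> R) :
  continuous f -> continuous (fun x => expR (f x)).
Proof.
move=> hf x; apply: (@continuous_comp _ _ _ f (@expR R)); first exact: hf.
exact: continuous_expR.
Qed.

Lemma phi_cont (R : realType) (eta p : R) : 0 < eta ->
  continuous (fun t : R => (eta / Num.sqrt (eta ^+ 2 + t ^+ 2)) `^ (1 - p)).
Proof.
move=> e0.
have pos : forall t : R, 0 < eta ^+ 2 + t ^+ 2.
  by move=> t; rewrite ltr_wpDr ?sqr_ge0 // exprn_gt0.
have pos2 : forall t : R, 0 < eta / Num.sqrt (eta ^+ 2 + t ^+ 2).
  by move=> t; rewrite divr_gt0 // sqrtr_gt0.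
have -> : (fun t : R => (eta / Num.sqrt (eta ^+ 2 + t ^+ 2)) `^ (1 - p)) =
          (fun t => expR ((1 - p) * ln (eta * (Num.sqrt (eta ^+ 2 + t ^+ 2))^-1))).
  by apply: funext => t; rewrite /powR gt_eqF.
apply: c_exp; apply: c_mul; first exact: c_cst.
apply: c_ln; last exact: pos2.
apply: c_mul; first exact: c_cst.
apply: c_inv; last by move=> t; rewrite gt_eqF // sqrtr_gt0.
apply: c_sqrt; apply: c_add; first exact: c_cst.
apply: c_sq; move=> t; exact: cvg_id.
Qed.


Lemma c_J (R : realType) m n (K : 'M[R]_(m, n)) (Dh Dv : 'M[R]_n) lam eta p y Psi :
  continuous (fun v : 'rV[R]_n => Jobj K Dh Dv lam eta p y Psi v^T).
Proof.
pose w := weight Dh Dv eta p (Psi y).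
have -> : (fun v : 'rV[R]_n => Jobj K Dh Dv lam eta p y Psi v^T) = (fun v =>
   Num.sqrt (\sum_i ((K *m v^T) i 0 - y i 0) ^+ 2) ^+ 2 + lam * \sum_i
   `|w i 0 * Num.sqrt ((Dh *m v^T) i 0 ^+ 2 + (Dv *m v^T) i 0 ^+ 2)|).
  apply: funext => v; rewrite /Jobj /norm2 /norm1; congr (_ ^+ 2 + _ * _).
    by congr Num.sqrt; apply: eq_bigr => i _; rewrite entryB.
  by apply: eq_bigr => i _; rewrite hadE absDE.
repeat first [ apply: c_cst | apply: c_mulmx | apply: c_sq | apply: c_add
  | apply: c_mul | apply: c_sqrt | apply: c_norm | apply: c_opp | apply: c_sum => ? ].
Qed.
Lemma Gcomp (R : realType) n (u v g : 'cV[R]_n) c :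
  (forall i, 0 <= u i 0) -> (forall i, 0 <= v i 0) -> (forall i, 0 <= g i 0) ->
  (forall i, u i 0 <= c * v i 0) ->
  norm1 (hadamard u g) <= c * norm1 (hadamard v g).
Proof.
move=> u0 v0 hg hu; rewrite !norm1_hadamard // mulr_sumr; apply: ler_sum => i _.
by rewrite mulrA ler_wpM2r.
Qed.

Lemma Jcomp_aux (R : realType) (F lam G1 G2 rho : R) : 0 <= F -> 0 <= lam -> 0 <= rho ->
  G1 <= (1 + rho) * G2 -> F + lam * G1 <= (1 + rho) * (F + lam * G2).
Proof.
move=> F0 l0 r0 hG; rewrite mulrDr; apply: lerD; first by rewrite mulrDl mul1r lerDl mulr_ge0.
by rewrite mulrCA ler_wpM2l.
Qed.

Lemma Jcomp (R : realType) m n (K : 'M[R]_(m, n)) (Dh Dv : 'M[R]_n) lam eta p y Psi1 Psi2 rho x :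
  0 <= lam -> 0 <= rho ->
  (forall i, weight Dh Dv eta p (Psi1 y) i 0 <= (1 + rho) * weight Dh Dv eta p (Psi2 y) i 0) ->
  Jobj K Dh Dv lam eta p y Psi1 x <= (1 + rho) * Jobj K Dh Dv lam eta p y Psi2 x.
Proof.
move=> l0 r0 hw; apply: Jcomp_aux => //; first exact: sqr_ge0.
apply: Gcomp => // i; [exact: weight_ge0 | exact: weight_ge0 | exact: absD_ge0].
Qed.
Lemma near_of_N (P : nat -> Prop) N : (forall k, (N <= k)%N -> P k) -> \forall k \near \oo, P k.
Proof. by move=> h; exists N. Qed.

Lemma N_of_near (P : nat -> Prop) : (\forall k \near \oo, P k) -> exists N, forall k, (N <= k)%N -> P k.
Proof. by move=> [N _ h]; exists N => k hk; apply: h. Qed.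

Lemma N_all n (P : 'I_n -> nat -> Prop) :
  (forall i, exists N, forall k, (N <= k)%N -> P i k) ->
  exists N, forall k, (N <= k)%N -> forall i, P i k.
Proof.
move=> /choice [f hf]; exists (\max_i f i)%N => k hk i; apply: hf.
by apply: leq_trans hk; exact: (leq_bigmax i).
Qed.
Theorem corollary1 (R : realType) (m n : nat) (K : 'M[R]_(m, n)) (Dh Dv : 'M[R]_n)
  (lam eta p delta : R) (xGT : 'cV[R]_n) (e ydelta : 'cV[R]_m)
  (Psi : nat -> 'cV[R]_m -> 'cV[R]_n) (Psistar : 'cV[R]_m -> 'cV[R]_n)
  (xs : nat -> 'cV[R]_n) (xstar : 'cV[R]_n) :
  (m <= n)%N ->
  0 < lam -> 0 < eta -> 0 < p -> p < 1 ->
  (forall x : 'cV[R]_n, K *m x = 0 -> Dh *m x = 0 -> Dv *m x = 0 -> x = 0) ->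
  0 <= delta ->
  Xset xGT -> norm2 e <= delta -> ydelta = K *m xGT + e ->
  (forall k, reconstructor (Psi k)) -> reconstructor Psistar ->
  (forall eps : R, 0 < eps -> exists N : nat, forall k : nat, (N <= k)%N ->
     forall y, Ydelta K delta y ->
       norm1 (absD Dh Dv (Psi k y) - absD Dh Dv (Psistar y)) <= eps) ->
  (forall k, unique_minimizer (Jobj K Dh Dv lam eta p ydelta (Psi k)) (xs k)) ->
  unique_minimizer (Jobj K Dh Dv lam eta p ydelta Psistar) xstar ->
  exists phi : nat -> nat, {homo phi : a b / (a < b)%N} /\
    (norm2 (xs (phi k) - xstar) @[k --> \oo] --> 0).
Proof.
move=> mn l0 e0 p0 p1 Hker d0 XGT He Hy Hrec Hrecs Hunif Hmin Hmin0.
have hY : Ydelta K delta ydelta.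
  rewrite /Ydelta /=.
  apply: (@le_trans _ _ (norm2 (K *m xGT - ydelta))).
    have hlb : has_lbound [set norm2 (K *m x - ydelta) | x in @Xset R n].
      by exists 0 => _ [x _ <-]; exact: norm2_ge0.
    by apply: (ge_inf hlb); exists xGT.
  by rewrite Hy opprD addrA subrr add0r norm2N.
have ha : forall i, (fun k => absD Dh Dv (Psi k ydelta) i 0) @ \oo --> absD Dh Dv (Psistar ydelta) i 0.
  move=> i; apply/cvgrPdist_le => eps eps0.
  have [N hN] := Hunif eps eps0.
  exists N => // k hk.
  apply: le_trans (hN k hk ydelta hY).
  by rewrite distrC -entryB; exact: coord_le_norm1.
have hw : forall i, (fun k => weight Dh Dv eta p (Psi k ydelta) i 0) @ \oo --> weight Dh Dv eta p (Psistar ydelta) i 0.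
  move=> i; under eq_fun do rewrite weightE. rewrite weightE.
  apply: (@continuous_cvg _ _ _ _ _ (fun k => absD Dh Dv (Psi k ydelta) i 0)
     (fun t => (eta / Num.sqrt (eta ^+ 2 + t ^+ 2)) `^ (1 - p))); last exact: ha.
  exact: phi_cont.
pose ws i := weight Dh Dv eta p (Psistar ydelta) i 0.
pose wk k i := weight Dh Dv eta p (Psi k ydelta) i 0.
have hev : forall s, 0 < s -> exists N, forall k, (N <= k)%N -> forall i, `|ws i - wk k i| <= s * ws i.
  move=> s s0; apply: N_all => i; apply: N_of_near.
  move/cvgrPdist_le: (hw i) => /(_ (s * ws i)); apply.
  by rewrite mulr_gt0 // weight_gt0.
set Js := Jobj K Dh Dv lam eta p ydelta Psistar.
have Jconv' : forall x t, Xset x -> 0 <= t <= 1 ->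
    Js ((1 - t) *: xstar + t *: x) <= (1 - t) * Js xstar + t * Js x.
  by move=> x t _ ht; apply: Jconv => //; exact: ltW.
have Jcont : continuous (fun v : 'rV[R]_n => Js v^T) by exact: c_J.
exists id; split; first by move=> a b.
apply/cvgrPdist_le => eps eps0.
have [c c0 hc] := wellposed _ _ Js xstar eps eps0 Jconv' Jcont Hmin0.
set J0 := Js xstar.
have J00 : 0 <= J0.
  rewrite /J0 /Js /Jobj; apply: addr_ge0; first exact: sqr_ge0.
  apply: mulr_ge0; first exact: ltW.
  by rewrite /norm1; apply: sumr_ge0 => i _; exact: normr_ge0.
pose rho := c / (c + 4 * (J0 + 1)).
have den0 : 0 < c + 4 * (J0 + 1) by rewrite addr_gt0 // mulr_gt0 // ltr_wpDl.
have rho0 : 0 < rho by rewrite divr_gt0.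
have rhoE : rho * (c + 4 * (J0 + 1)) = c by rewrite mulfVK // gt_eqF.
have rho1 : rho <= 1 by rewrite ler_pdivrMr // mul1r lerDl mulr_ge0 // addr_ge0.
have [N hN] := hev (rho / 2) (divr_gt0 rho0 (ltr0Sn _ 1)).
exists N => // k hk.
have hk' := hN k hk.
have wi1 : forall i, wk k i <= (1 + rho) * ws i.
  move=> i; have := hk' i; rewrite ler_distl => /andP[h1 h2].
  have h3 : 0 < ws i := weight_gt0 _ _ Dh Dv eta p (Psistar ydelta) i e0.
  have hs : rho / 2 * 2 = rho by rewrite mulfVK.
  move: h1 h2 hs; set s := rho / 2 => h1 h2 hs.
  nra.
have wi2 : forall i, ws i <= (1 + rho) * wk k i.
  move=> i; have := hk' i; rewrite ler_distl => /andP[h1 h2].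
  have h3 : 0 < ws i := weight_gt0 _ _ Dh Dv eta p (Psistar ydelta) i e0.
  have hs : rho / 2 * 2 = rho by rewrite mulfVK.
  move: h1 h2 hs; set s := rho / 2 => h1 h2 hs.
  nra.
have [Xk [Jk _]] := Hmin k.
have [X0 _] := Hmin0.
have hA : Js (xs k) <= (1 + rho) * Jobj K Dh Dv lam eta p ydelta (Psi k) (xs k).
  by apply: Jcomp => //; exact: ltW.
have hB := Jk xstar X0.
have hC : Jobj K Dh Dv lam eta p ydelta (Psi k) xstar <= (1 + rho) * J0.
  by apply: Jcomp => //; exact: ltW.
have hlt : Js (xs k) < J0 + c.
  have h1 : rho * (2 + rho) * J0 <= 3 * rho * J0.
    have r1 : 0 <= 1 - rho by rewrite subr_ge0.
    have := mulr_ge0 (mulr_ge0 (ltW rho0) r1) J00; nra.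
  have h2 : 4 * (rho * (J0 + 1)) <= c.
    have := mulr_ge0 (ltW rho0) (ltW c0); nra.
  nra.
rewrite sub0r normrN ger0_norm ?norm2_ge0 //.
apply: ltW; rewrite ltNge; apply/negP => hge.
have := hc (xs k) Xk hge; rewrite leNgt hlt //.
Qed.
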